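(* Let $\rho_{AE}\in\mathcal S(AE)$ with $A=A_1\otimes A_2$, let $\{U_1,\dots,U_L\}$ be unitaries on $A$ with corresponding measurements $\mathcal M^j_{A\to K_1}(\cdot)=\mathcal I_{A_1\to K_1}(\mathcal T_{A\to A_1}(U_j\cdot U_j^\dagger))$, and suppose \[ \frac1L\sum_{j=1}^L\Bigl\|\mathcal M^j_{A\to K_1}(\rho_{AE})-\frac{\mathbb I_{K_1}}{|K_1|}\otimes\rho_E\Bigr\|_1\le\varepsilon(\rho) \] for some number $\varepsilon(\rho)$. Then $H_{\min}^{\sqrt{2\varepsilon(\rho)}}(K_1|EJ)_\rho\ge\log|K_1|$, where $\rho_{K_1EJ}=\frac1L\sum_{j=1}^L\mathcal M^j_{A\to K_1}(\rho_{AE})\otimes|j\rangle\langle j|_J$.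
   Context: All Hilbert spaces are finite-dimensional; $\log$ is base 2; $\mathcal S$ density operators, $\mathcal S_{\le}$ positive operators of trace $\le1$. Fix computational bases $\{|a_1\rangle\}$ of $A_1$, $\{|a_2\rangle\}$ of $A_2$; $\mathcal T_{A\to A_1}(X)=\sum_{a_1,a_2}\langle a_1a_2|X|a_1a_2\rangle|a_1\rangle\langle a_1|$ (applied as $\mathcal T\otimes\mathrm{id}_E$); $K_1$ is a copy of $A_1$ and $\mathcal I_{A_1\to K_1}$ the identity relabeling $|a_1\rangle\langle a_1'|\mapsto|a_1\rangle\langle a_1'|$; $J$ is a classical register with orthonormal basis $\{|j\rangle\}_{j=1}^L$. For $\rho_{AB}\in\mathcal S_{\le}(AB)$, $\sigma_B\in\mathcal S(B)$: $H_{\min}(A|B)_{\rho|\sigma}=\max\{\lambda:2^{-\lambda}\mathbb I_A\otimes\sigma_B\ge\rho_{AB}\}$, $H_{\min}(A|B)_\rho=\max_{\sigma_B}H_{\min}(A|B)_{\rho|\sigma}$; $\bar F(\rho,\sigma)=\|\sqrt\rho\sqrt\sigma\|_1+\sqrt{(1-\mathrm{tr}\rho)(1-\mathrm{tr}\sigma)}$, $P=\sqrt{1-\bar F^2}$, $H^\varepsilon_{\min}(A|B)_\rho=\max\{H_{\min}(A|B)_{\tilde\rho}:\tilde\rho_{AB}\in\mathcal S_{\le}(AB),P(\rho_{AB},\tilde\rho_{AB})\le\varepsilon\}$. *)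

(* Defs.v *)
From HB Require Import structures.
From mathcomp Require Import all_boot all_order all_algebra.
From mathcomp Require Import complex mxtens.
From mathcomp Require Import all_classical all_reals.
From mathcomp Require Import ereal exp.
From Stdlib Require Import ClassicalEpsilon.

Set Implicit Arguments.
Unset Strict Implicit.
Unset Printing Implicit Defensive.

Import Order.TTheory GRing.Theory Num.Theory.
Local Open Scope ring_scope.
Local Open Scope sesquilinear_scope.

(* Composite systems A (x) B are represented on dimension m * n with the
   Kronecker product  *t  of mxtens (index (a,b) |-> a * n + b). *)

Definition adj {R : realType} m n (M : 'M[R[i]]_(m, n)) : 'M[R[i]]_(n, m) := M ^t*.

Definition psdmx {R : realType} n (M : 'M[R[i]]_n) : Prop :=
  adj M = M /\ forall v : 'cV[R[i]]_n, 0 <= (adj v *m M *m v) 0 0.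

Definition lemx {R : realType} n (A B : 'M[R[i]]_n) : Prop := psdmx (B - A).

Definition trR {R : realType} n (M : 'M[R[i]]_n) : R := complex.Re (\tr M).

Definition density {R : realType} n (M : 'M[R[i]]_n) : Prop :=
  psdmx M /\ \tr M = 1.
Definition subnormalized {R : realType} n (M : 'M[R[i]]_n) : Prop :=
  psdmx M /\ trR M <= 1.

Definition msqrt {R : realType} n (M : 'M[R[i]]_n) : 'M[R[i]]_n :=
  epsilon (inhabits 0) (fun B : 'M[R[i]]_n => psdmx B /\ B *m B = M).

Definition trnorm {R : realType} n (X : 'M[R[i]]_n) : R :=
  trR (msqrt (adj X *m X)).

Definition Fbar {R : realType} n (rho sig : 'M[R[i]]_n) : R :=
  trnorm (msqrt rho *m msqrt sig) + Num.sqrt ((1 - trR rho) * (1 - trR sig)).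
Definition Pdist {R : realType} n (rho sig : 'M[R[i]]_n) : R :=
  Num.sqrt (1 - Fbar rho sig ^+ 2).

(* H_min(A|B)_{rho|sigma} = max {lambda : 2^{-lambda} I_A (x) sigma_B >= rho_AB}
   (taken as a supremum in the extended reals) *)
Definition Hmin_rel {R : realType} a b (rho : 'M[R[i]]_(a * b)) (sig : 'M[R[i]]_b)
  : \bar R :=
  ereal_sup [set (l%:E)%E | l in
    [set l : R | lemx rho ((((2 : R) `^ (- l))%:C)%C *: ((1%:M : 'M[R[i]]_a) *t sig))]].

Definition Hmin {R : realType} a b (rho : 'M[R[i]]_(a * b)) : \bar R :=
  ereal_sup [set Hmin_rel rho sig | sig in [set sig : 'M[R[i]]_b | density sig]].

Definition Hmin_smooth {R : realType} a b (eps : R) (rho : 'M[R[i]]_(a * b)) : \bar R :=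
  ereal_sup [set Hmin rt | rt in
    [set rt : 'M[R[i]]_(a * b) | subnormalized rt /\ Pdist rho rt <= eps]].

Definition ptrace1 {R : realType} m n (X : 'M[R[i]]_(m * n)) : 'M[R[i]]_n :=
  \matrix_(i, j) \sum_(a < m) X (mxtens_index (a, i)) (mxtens_index (a, j)).

(* (T_{A -> A1} (x) id_E)(X),  A = A1 (x) A2:
   sum_{a1,a2} |a1><a1| (x) (<a1 a2| (x) I_E) X (|a1 a2> (x) I_E) *)
Definition Tmap {R : realType} a1 a2 e (X : 'M[R[i]]_(a1 * a2 * e)) : 'M[R[i]]_(a1 * e) :=
  \matrix_(i, j)
    if (mxtens_unindex i).1 == (mxtens_unindex j).1 then
      \sum_(x2 < a2)
        X (mxtens_index (mxtens_index ((mxtens_unindex i).1, x2), (mxtens_unindex i).2))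
          (mxtens_index (mxtens_index ((mxtens_unindex j).1, x2), (mxtens_unindex j).2))
    else 0.

(* identity relabelling I_{A1 -> K1} (K1 is a copy of A1, |K1| = |A1|) *)
Definition relabel {R : realType} n (X : 'M[R[i]]_n) : 'M[R[i]]_n := X.

Definition Mmeas {R : realType} a1 a2 e (U : 'M[R[i]]_(a1 * a2))
  (X : 'M[R[i]]_(a1 * a2 * e)) : 'M[R[i]]_(a1 * e) :=
  relabel (Tmap ((U *t (1%:M : 'M[R[i]]_e)) *m X *m adj (U *t (1%:M : 'M[R[i]]_e)))).

Definition log2 {R : realType} (x : R) : R := ln x / ln 2.

(* Main.v *)
Require Import Defs.
From HB Require Import structures.
From mathcomp Require Import all_boot all_order all_algebra.
From mathcomp Require Import complex mxtens.
From mathcomp Require Import all_classical all_reals.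
From mathcomp Require Import ereal exp.
From Stdlib Require Import ClassicalEpsilon.
From mathcomp Require Import ring lra.
Import Order.TTheory GRing.Theory Num.Theory Num.Def.
Local Open Scope ring_scope.

Set Implicit Arguments.
Unset Strict Implicit.
Unset Printing Implicit Defensive.

Lemma adjE {R : realType} m n (M : 'M[R[i]]_(m, n)) i j : adj M i j = conjC (M j i).
Proof. by rewrite /adj !mxE. Qed.

Lemma adjK {R : realType} m n (M : 'M[R[i]]_(m, n)) : adj (adj M) = M.
Proof. by apply/matrixP=> i j; rewrite !adjE conjCK. Qed.

Lemma adjM {R : realType} m n p (A : 'M[R[i]]_(m, n)) (B : 'M[R[i]]_(n, p)) :
  adj (A *m B) = adj B *m adj A.
Proof.
apply/matrixP=> i j; rewrite adjE !mxE rmorph_sum; apply: eq_bigr => k _.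
by rewrite !adjE rmorphM mulrC.
Qed.

Lemma adjD {R : realType} m n (A B : 'M[R[i]]_(m, n)) : adj (A + B) = adj A + adj B.
Proof. by apply/matrixP=> i j; rewrite !mxE rmorphD. Qed.

Lemma adjN {R : realType} m n (A : 'M[R[i]]_(m, n)) : adj (- A) = - adj A.
Proof. by apply/matrixP=> i j; rewrite !mxE rmorphN. Qed.

Lemma adjB {R : realType} m n (A B : 'M[R[i]]_(m, n)) : adj (A - B) = adj A - adj B.
Proof. by rewrite adjD adjN. Qed.

Lemma adjZ {R : realType} m n c (A : 'M[R[i]]_(m, n)) : adj (c *: A) = conjC c *: adj A.
Proof. by apply/matrixP=> i j; rewrite !mxE rmorphM. Qed.

Lemma adj0 {R : realType} m n : adj (0 : 'M[R[i]]_(m, n)) = 0.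
Proof. by apply/matrixP=> i j; rewrite !mxE rmorph0. Qed.

Lemma adj1 {R : realType} n : adj (1%:M : 'M[R[i]]_n) = 1%:M.
Proof. by apply/matrixP=> i j; rewrite adjE !mxE eq_sym conjC_nat. Qed.

Lemma adj_sum {R : realType} m n I (r : seq I) (P : pred I) (F : I -> 'M[R[i]]_(m, n)) :
  adj (\sum_(k <- r | P k) F k) = \sum_(k <- r | P k) adj (F k).
Proof.
apply/matrixP=> i j; rewrite adjE !summxE rmorph_sum; apply: eq_bigr => k _.
by rewrite adjE.
Qed.

Lemma adj_tens {R : realType} m n p q (A : 'M[R[i]]_(m, n)) (B : 'M[R[i]]_(p, q)) :
  adj (A *t B) = adj A *t adj B.
Proof. by rewrite /adj trmx_tens map_mxT. Qed.

Lemma adj_delta {R : realType} m n (j : 'I_m) (k : 'I_n) :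
  adj (delta_mx j k : 'M[R[i]]_(m, n)) = delta_mx k j.
Proof.
apply/matrixP=> a b; rewrite adjE !mxE.
by case: (b == j); case: (a == k); rewrite /= ?rmorph1 ?rmorph0.
Qed.

Lemma form_ge0 {R : realType} n (w : 'cV[R[i]]_n) : 0 <= (adj w *m w) 0 0.
Proof.
rewrite !mxE; apply: sumr_ge0 => k _; rewrite adjE -normCKC.
by rewrite exprn_ge0.
Qed.

Lemma psd_herm {R : realType} n (M : 'M[R[i]]_n) : psdmx M -> adj M = M.
Proof. by case. Qed.

Lemma psd_adjXX {R : realType} m n (X : 'M[R[i]]_(m, n)) : psdmx (adj X *m X).
Proof.
split; first by rewrite adjM adjK.
move=> v; rewrite mulmxA -adjM -mulmxA; exact: form_ge0.
Qed.

Lemma psd_conj {R : realType} m n (M : 'M[R[i]]_m) (X : 'M[R[i]]_(m, n)) :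
  psdmx M -> psdmx (adj X *m M *m X).
Proof.
case=> hM fM; split; first by rewrite !adjM adjK hM mulmxA.
move=> v; have := fM (X *m v).
by rewrite adjM !mulmxA.
Qed.

Lemma psd0 {R : realType} n : psdmx (0 : 'M[R[i]]_n).
Proof. by split; [rewrite adj0 | move=> v; rewrite mulmx0 mul0mx mxE]. Qed.

Lemma psdD {R : realType} n (A B : 'M[R[i]]_n) : psdmx A -> psdmx B -> psdmx (A + B).
Proof.
case=> hA fA [hB fB]; split; first by rewrite adjD hA hB.
move=> v; rewrite mulmxDr mulmxDl mxE; exact: addr_ge0.
Qed.

Lemma psd_sum {R : realType} n I (r : seq I) (P : pred I) (F : I -> 'M[R[i]]_n) :
  (forall k, P k -> psdmx (F k)) -> psdmx (\sum_(k <- r | P k) F k).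
Proof.
move=> H; elim/big_rec: _ => [|k x Pk Hx]; first exact: psd0.
exact: psdD (H _ Pk) Hx.
Qed.

Lemma psdZ {R : realType} n (c : R[i]) (A : 'M[R[i]]_n) : 0 <= c -> psdmx A -> psdmx (c *: A).
Proof.
move=> c0 [hA fA]; split.
  by rewrite adjZ hA conj_Creal // ger0_real.
move=> v; rewrite -scalemxAr -scalemxAl mxE; exact: mulr_ge0.
Qed.

Lemma psd_entry {R : realType} n (M : 'M[R[i]]_n) k : psdmx M -> 0 <= M k k.
Proof.
case=> _ /(_ (delta_mx k 0)); rewrite adj_delta.
suff -> : ((delta_mx 0 k : 'M_(1, n)) *m M *m (delta_mx k 0 : 'cV_n)) 0 0 = M k k by [].
rewrite mxE (bigD1 k) //= big1 => [|j /negbTE jk]; last by rewrite [delta_mx _ _ _ _]mxE jk mulr0.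
rewrite [delta_mx _ _ _ _]mxE !eqxx mulr1 mxE (bigD1 k) //= big1 => [|j /negbTE jk].
  by rewrite mxE !eqxx mul1r !addr0.
by rewrite mxE jk andbF mul0r.
Qed.

Lemma unitary_adjR {R : realType} m n (P : 'M[R[i]]_(m, n)) :
  P \is unitarymx -> P *m adj P = 1%:M.
Proof. by move/unitarymxP. Qed.

Lemma unitary_adjL {R : realType} n (P : 'M[R[i]]_n) :
  P \is unitarymx -> adj P *m P = 1%:M.
Proof.
move=> uP; rewrite /adj -invmx_unitary //; apply: mulVmx.
exact: unitarymx_unit.
Qed.

Lemma adj_unitary {R : realType} n (P : 'M[R[i]]_n) :
  P \is unitarymx -> adj P \is unitarymx.
Proof. by rewrite /adj trmxC_unitary. Qed.

Lemma conj_unitK {R : realType} n (P D : 'M[R[i]]_n) :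
  P \is unitarymx -> P *m (adj P *m D *m P) *m adj P = D.
Proof.
move=> uP; rewrite !mulmxA (unitary_adjR uP) mul1mx -mulmxA (unitary_adjR uP).
by rewrite mulmx1.
Qed.

Lemma herm_spec {R : realType} n (M : 'M[R[i]]_n) : adj M = M ->
  exists (P : 'M[R[i]]_n) (d : 'rV[R[i]]_n), [/\ P \is unitarymx, M = adj P *m diag_mx d *m P &
                  forall k, d 0 k \is Num.real].
Proof.
move=> hM.
have nM : M \is normalmx by apply/normalmxP; move: hM; rewrite /adj => ->.
have /orthomx_spectralP eM := nM.
set P := spectralmx M in eM; set d := spectral_diag M in eM.
have uP : P \is unitarymx by exact: spectral_unitarymx.
rewrite invmx_unitary // in eM.
exists P, d; split => // k.
have eD : diag_mx d = P *m M *m adj P by rewrite eM -/(adj P) conj_unitK.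
have hD : adj (diag_mx d) = diag_mx d by rewrite eD !adjM adjK hM mulmxA.
have := congr1 (fun X : 'M_n => X k k) hD; rewrite /= adjE !mxE eqxx mulr1n.
by move=> h; rewrite CrealE h.
Qed.

Lemma psd_diag {R : realType} n (d : 'rV[R[i]]_n) :
  (forall k, 0 <= d 0 k) -> psdmx (diag_mx d).
Proof.
move=> d0; set s := \row_k sqrtC (d 0 k).
have hs : adj (diag_mx s) = diag_mx s.
  apply/matrixP=> a b; rewrite adjE !mxE; case: eqP => [->|ba]; last first.
    by rewrite eq_sym; case: eqP => // _; rewrite !mulr0n rmorph0.
  by rewrite eqxx !mulr1n conj_Creal // sqrtC_real.
have -> : diag_mx d = adj (diag_mx s) *m diag_mx s.
  rewrite hs mulmx_diag; congr diag_mx; apply/rowP => k; rewrite !mxE.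
  by rewrite -expr2 sqrtCK.
exact: psd_adjXX.
Qed.

Lemma psd_spec {R : realType} n (M : 'M[R[i]]_n) : psdmx M ->
  exists (P : 'M[R[i]]_n) (d : 'rV[R[i]]_n), [/\ P \is unitarymx, M = adj P *m diag_mx d *m P &
                  forall k, 0 <= d 0 k].
Proof.
move=> pM; have [P [d [uP eM _]]] := herm_spec (psd_herm pM).
exists P, d; split => // k.
have eD : diag_mx d = adj (adj P) *m M *m adj P by rewrite adjK eM conj_unitK.
have := psd_entry k (psd_conj (adj P) pM); rewrite -eD mxE eqxx mulr1n.
done.
Qed.

Lemma psd_sqrt_ex {R : realType} n (M : 'M[R[i]]_n) : psdmx M ->
  exists B, psdmx B /\ B *m B = M.
Proof.
move=> pM; have [P [d [uP eM d0]]] := psd_spec pM.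
set s := \row_k sqrtC (d 0 k).
exists (adj P *m diag_mx s *m P); split.
  apply: psd_conj; apply: psd_diag => k; rewrite mxE sqrtC_ge0; exact: d0.
rewrite eM -!mulmxA; congr (_ *m _).
rewrite (mulmxA P (adj P)) (unitary_adjR uP) mul1mx mulmxA mulmx_diag.
congr (_ *m _); congr diag_mx; apply/rowP => k; rewrite !mxE.
by rewrite -expr2 sqrtCK.
Qed.

Lemma conjM_unit {R : realType} n (P A B : 'M[R[i]]_n) : P \is unitarymx ->
  P *m (A *m B) *m adj P = (P *m A *m adj P) *m (P *m B *m adj P).
Proof.
move=> uP; by rewrite !mulmxA -(mulmxA (P *m A) (adj P) P) (unitary_adjL uP) mulmx1.
Qed.

Lemma norm_le_sum {R : realType} (a b : R[i]) : 0 <= a -> 0 <= b ->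
  `|a - b| <= a + b.
Proof.
move=> a0 b0; have rab : a - b \is Num.real by rewrite rpredB ?ger0_real.
rewrite real_ler_norml // opprD; apply/andP; split.
  by rewrite lerD2r; apply: (le_trans _ a0); rewrite oppr_le0.
by rewrite lerD2l; apply: (le_trans _ b0); rewrite oppr_le0.
Qed.

Lemma core_ps {R : realType} n (A B Q : 'M[R[i]]_n) (mu : 'rV[R[i]]_n) :
  psdmx A -> psdmx B -> Q \is unitarymx ->
  A - B = adj Q *m diag_mx mu *m Q -> forall k,
  (Q *m (A *m A - B *m B) *m adj Q) k k =
     mu 0 k * ((Q *m A *m adj Q) k k + (Q *m B *m adj Q) k k) /\
  `|mu 0 k| <= (Q *m A *m adj Q) k k + (Q *m B *m adj Q) k k.
Proof.
move=> pA pB uQ eH k.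
set A' := Q *m A *m adj Q; set B' := Q *m B *m adj Q.
have eD : A' = B' + diag_mx mu.
  rewrite /A' /B' -(conj_unitK (diag_mx mu) uQ) -eH mulmxBr mulmxBl.
  by rewrite addrC subrK.
have emu : mu 0 k = A' k k - B' k k by rewrite eD mxE addrAC subrr add0r mxE eqxx mulr1n.
have a0 : 0 <= A' k k by have := psd_entry k (psd_conj (adj Q) pA); rewrite adjK.
have b0 : 0 <= B' k k by have := psd_entry k (psd_conj (adj Q) pB); rewrite adjK.
split; last by rewrite emu; exact: norm_le_sum.
rewrite mulmxBr mulmxBl !conjM_unit // -/A' -/B'.
clearbody A' B'; subst A'.
rewrite mulmxDl !mulmxDr addrAC [X in X + _]addrAC subrr add0r.
rewrite mulmx_diag mul_mx_diag mul_diag_mx !mxE eqxx /= mulr1n.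
ring.
Qed.

Lemma psd_sqrt_uniq {R : realType} n (B1 B2 : 'M[R[i]]_n) :
  psdmx B1 -> psdmx B2 -> B1 *m B1 = B2 *m B2 -> B1 = B2.
Proof.
move=> p1 p2 e12.
have hH : adj (B1 - B2) = B1 - B2 by rewrite adjB !psd_herm.
have [Q [d [uQ eH _]]] := herm_spec hH.
suff d0 : d = 0.
  by apply/eqP; rewrite -subr_eq0 eH d0 raddf0 mulmx0 mul0mx.
apply/rowP => k; rewrite mxE.
have [eY le] := core_ps p1 p2 uQ eH k.
move: eY; rewrite e12 subrr mulmx0 mul0mx mxE => /esym /eqP; rewrite mulf_eq0.
case/orP => /eqP // s0; move: le; rewrite s0 normr_le0 => /eqP //.
Qed.

Lemma msqrt_spec {R : realType} n (M : 'M[R[i]]_n) : psdmx M ->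
  psdmx (msqrt M) /\ msqrt M *m msqrt M = M.
Proof.
move=> pM; rewrite /msqrt.
exact: (epsilon_spec (inhabits 0) (fun B : 'M[R[i]]_n => psdmx B /\ B *m B = M) (psd_sqrt_ex pM)).
Qed.

Lemma msqrt_uniq {R : realType} n (M B : 'M[R[i]]_n) :
  psdmx B -> B *m B = M -> msqrt M = B.
Proof.
move=> pB eB; have pM : psdmx M by rewrite -eB -{1}(psd_herm pB); exact: psd_adjXX.
have [p1 e1] := msqrt_spec pM.
by apply: psd_sqrt_uniq => //; rewrite e1.
Qed.

Lemma tr_conj_unit {R : realType} n (P D : 'M[R[i]]_n) :
  P \is unitarymx -> \tr (adj P *m D *m P) = \tr D.
Proof. by move=> uP; rewrite mxtrace_mulC mulmxA (unitary_adjR uP) mul1mx. Qed.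

Lemma Re_le {R : realType} (a b : R[i]) : a <= b -> complex.Re a <= complex.Re b.
Proof. by rewrite lecE => /andP[]. Qed.

Lemma Re_norm {R : realType} (z : R[i]) : complex.Re z <= complex.Re `|z|.
Proof.
rewrite normc_def /=; apply: (le_trans (ler_norm _)).
rewrite -sqrtr_sqr; apply: ler_wsqrtr; rewrite lerDl; exact: sqr_ge0.
Qed.

Lemma Re_sum {R : realType} I (r : seq I) (P : pred I) (F : I -> R[i]) :
  complex.Re (\sum_(k <- r | P k) F k) = \sum_(k <- r | P k) complex.Re (F k).
Proof. by apply: big_morph => [[a b] [c d]|]. Qed.

Lemma tr_psd_ge0 {R : realType} n (M : 'M[R[i]]_n) : psdmx M -> 0 <= \tr M.
Proof. by move=> pM; rewrite /mxtrace; apply: sumr_ge0 => k _; exact: psd_entry. Qed.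

Lemma trnorm_ge0 {R : realType} n (X : 'M[R[i]]_n) : 0 <= trnorm X.
Proof.
rewrite /trnorm /trR; have [p _] := msqrt_spec (psd_adjXX X).
by have := Re_le (tr_psd_ge0 p).
Qed.

Lemma adj_diag_real {R : realType} n (d : 'rV[R[i]]_n) :
  (forall k, d 0 k \is Num.real) -> adj (diag_mx d) = diag_mx d.
Proof.
move=> rd; apply/matrixP=> i j; rewrite adjE !mxE.
have [->|ne] := eqVneq i j; first by rewrite /= !mulr1n conj_Creal.
by rewrite /= !mulr0n rmorph0.
Qed.

Lemma trnorm_herm {R : realType} n (Y P : 'M[R[i]]_n) (d : 'rV[R[i]]_n) :
  P \is unitarymx -> Y = adj P *m diag_mx d *m P -> (forall k, d 0 k \is Num.real) ->
  trnorm Y = complex.Re (\sum_k `|d 0 k|).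
Proof.
move=> uP eY rd; set a := \row_k `|d 0 k|.
have hY : adj Y = Y by rewrite eY !adjM adjK mulmxA adj_diag_real.
have sq : forall D1 D2 : 'rV[R[i]]_n,
    (adj P *m diag_mx D1 *m P) *m (adj P *m diag_mx D2 *m P) =
    adj P *m diag_mx (\row_k (D1 0 k * D2 0 k)) *m P.
  move=> D1 D2; rewrite !mulmxA -(mulmxA _ P (adj P)) (unitary_adjR uP) mulmx1.
  by rewrite -(mulmxA (adj P)) mulmx_diag.
rewrite /trnorm; have -> : msqrt (adj Y *m Y) = adj P *m diag_mx a *m P.
  apply: msqrt_uniq.
    apply: psd_conj; apply: psd_diag => k; rewrite mxE; exact: normr_ge0.
  rewrite hY sq eY sq; congr (_ *m diag_mx _ *m _); apply/rowP => k; rewrite !mxE.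
  by rewrite -!expr2 real_normK.
by rewrite /trR tr_conj_unit // mxtrace_diag; congr complex.Re; apply: eq_bigr => k _; rewrite mxE.
Qed.

Lemma unitary_col_norm {R : realType} n (W : 'M[R[i]]_n) l :
  W \is unitarymx -> \sum_k `|W k l| ^+ 2 = 1.
Proof.
move=> uW; have := congr1 (fun M : 'M_n => M l l) (unitary_adjL uW).
rewrite /= [in X in _ = X -> _]mxE eqxx /= mulr1n mxE => <-; apply: eq_bigr => k _.
by rewrite adjE normCKC.
Qed.

Lemma diag_sum_le {R : realType} n (Y P Q : 'M[R[i]]_n) (d : 'rV[R[i]]_n) :
  P \is unitarymx -> Q \is unitarymx -> Y = adj P *m diag_mx d *m P ->
  \sum_k `|(Q *m Y *m adj Q) k k| <= \sum_k `|d 0 k|.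
Proof.
move=> uP uQ eY; set W := Q *m adj P.
have uW : W \is unitarymx by apply: mul_unitarymx => //; exact: adj_unitary.
have -> : Q *m Y *m adj Q = W *m diag_mx d *m adj W.
  by rewrite eY /W adjM adjK !mulmxA.
have ent : forall k, (W *m diag_mx d *m adj W) k k = \sum_l d 0 l * `|W k l| ^+ 2.
  move=> k; rewrite mul_mx_diag mxE; apply: eq_bigr => l _.
  by rewrite mxE adjE normCK; ring.
apply: (@le_trans _ _ (\sum_k \sum_l `|d 0 l| * `|W k l| ^+ 2)).
  apply: ler_sum => k _; rewrite ent; apply: (le_trans (ler_norm_sum _ _ _)).
  by apply: ler_sum => l _; rewrite normrM (ger0_norm (exprn_ge0 _ (normr_ge0 _))).
rewrite exchange_big /=; apply: ler_sum => l _.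
by rewrite -mulr_sumr unitary_col_norm // mulr1.
Qed.

Lemma Re_tr_le_trnorm {R : realType} n (X : 'M[R[i]]_n) :
  complex.Re (\tr X) <= trnorm X.
Proof.
have [Q [g [uQ eXX g0]]] := psd_spec (psd_adjXX X).
set s := \row_k sqrtC (g 0 k).
have -> : trnorm X = complex.Re (\sum_k s 0 k).
  rewrite /trnorm (@msqrt_uniq _ _ _ (adj Q *m diag_mx s *m Q)).
  - by rewrite /trR tr_conj_unit // mxtrace_diag.
  - by apply: psd_conj; apply: psd_diag => k; rewrite mxE sqrtC_ge0.
  rewrite eXX !mulmxA -(mulmxA _ Q (adj Q)) (unitary_adjR uQ) mulmx1.
  rewrite -(mulmxA (adj Q)) mulmx_diag; congr (_ *m diag_mx _ *m _).
  by apply/rowP => k; rewrite !mxE -expr2 sqrtCK.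
set Z := Q *m X *m adj Q.
have eZ : adj Z *m Z = diag_mx g.
  rewrite /Z !adjM adjK !mulmxA -(mulmxA _ (adj Q) Q) (unitary_adjL uQ) mulmx1.
  by rewrite -(mulmxA Q (adj X) X) eXX conj_unitK.
have trZ : \tr X = \tr Z.
  by rewrite /Z mxtrace_mulC mulmxA (unitary_adjL uQ) mul1mx.
clearbody Z.
have Zk : forall k, `|Z k k| <= s 0 k.
  move=> k; rewrite /s mxE.
  have h : `|Z k k| ^+ 2 <= g 0 k.
    have := congr1 (fun M : 'M_n => M k k) eZ; rewrite /= !mxE eqxx mulr1n => <-.
    rewrite (bigD1 k) //= adjE -normCKC lerDl; apply: sumr_ge0 => j _.
    by rewrite adjE -normCKC exprn_ge0.
  by rewrite -(sqrCK (normr_ge0 (Z k k))) ler_sqrtC ?nnegrE ?exprn_ge0.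
apply: (le_trans (Re_norm _)); apply: Re_le; rewrite trZ /mxtrace.
apply: (le_trans (ler_norm_sum _ _ _)); apply: ler_sum => k _; exact: Zk.
Qed.

Lemma ps_bound {R : realType} n (rho tau : 'M[R[i]]_n) :
  psdmx rho -> psdmx tau -> \tr rho = 1 -> \tr tau = 1 ->
  1 - trnorm (rho - tau) / 2 <= complex.Re (\tr (msqrt rho *m msqrt tau)).
Proof.
move=> pr pt tr1 tt1.
have [pA eA] := msqrt_spec pr; have [pB eB] := msqrt_spec pt.
set A := msqrt rho in pA eA *; set B := msqrt tau in pB eB *.
have hH : adj (A - B) = A - B by rewrite adjB !psd_herm.
have [Q [mu [uQ eH rmu]]] := herm_spec hH.
have hY : adj (rho - tau) = rho - tau by rewrite adjB !psd_herm.
have [P [d [uP eY rd]]] := herm_spec hY.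
have key : \sum_k mu 0 k ^+ 2 <= \sum_k `|d 0 k|.
  apply: (le_trans _ (diag_sum_le uP uQ eY)); apply: ler_sum => k _.
  have [e1 le1] := core_ps pA pB uQ eH k.
  rewrite -eA -eB e1 normrM -(real_normK (rmu k)) expr2.
  by apply: ler_wpM2l => //; rewrite (ger0_norm (le_trans (normr_ge0 _) le1)).
have trH : \sum_k mu 0 k ^+ 2 = 1 + 1 - (\tr (A *m B)) *+ 2.
  have -> : \sum_k mu 0 k ^+ 2 = \tr ((A - B) *m (A - B)).
    rewrite eH !mulmxA -(mulmxA _ Q (adj Q)) (unitary_adjR uQ) mulmx1.
    rewrite -(mulmxA (adj Q)) mulmx_diag tr_conj_unit // mxtrace_diag.
    by apply: eq_bigr => k _; rewrite mxE expr2.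
  rewrite mulmxBl !mulmxBr !raddfB /= eA eB tr1 tt1 (mxtrace_mulC B A).
  rewrite mulr2n; ring.
have := Re_le key; rewrite trH -(trnorm_herm uP eY rd) !raddfB /= raddfMn /=.
lra.
Qed.

Lemma pdist_bound {R : realType} n (rho tau : 'M[R[i]]_n) (eps : R) :
  psdmx rho -> psdmx tau -> \tr rho = 1 -> \tr tau = 1 ->
  trnorm (rho - tau) <= eps -> Pdist rho tau <= Num.sqrt (2 * eps).
Proof.
move=> pr pt tr1 tt1 le.
have h1 := ps_bound pr pt tr1 tt1.
have h2 := Re_tr_le_trnorm (msqrt rho *m msqrt tau).
have t0 := trnorm_ge0 (rho - tau).
have s0 : 0 <= Num.sqrt ((1 - trR rho) * (1 - trR tau)) by exact: sqrtr_ge0.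
have f0 := trnorm_ge0 (msqrt rho *m msqrt tau).
rewrite /Pdist /Fbar; apply: ler_wsqrtr.
set F := trnorm (msqrt rho *m msqrt tau) + _.
have hF : 1 - trnorm (rho - tau) / 2 <= F by rewrite /F; lra.
have F0 : 0 <= F by rewrite /F; lra.
case: (lerP 0 (1 - trnorm (rho - tau) / 2)) => c.
  have : (1 - trnorm (rho - tau) / 2) ^+ 2 <= F ^+ 2 by rewrite ler_pXn2r // nnegrE.
  nra.
nra.
Qed.

Lemma tensmxDl {R : realType} m n p q (A1 A2 : 'M[R[i]]_(m, n)) (B : 'M[R[i]]_(p, q)) :
  (A1 + A2) *t B = A1 *t B + A2 *t B.
Proof. by apply/matrixP=> i j; rewrite !mxE mulrDl. Qed.

Lemma tensmxNl {R : realType} m n p q (A : 'M[R[i]]_(m, n)) (B : 'M[R[i]]_(p, q)) :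
  (- A) *t B = - (A *t B).
Proof. by apply/matrixP=> i j; rewrite !mxE mulNr. Qed.

Lemma tensmxBl {R : realType} m n p q (A1 A2 : 'M[R[i]]_(m, n)) (B : 'M[R[i]]_(p, q)) :
  (A1 - A2) *t B = A1 *t B - A2 *t B.
Proof. by rewrite tensmxDl tensmxNl. Qed.

Lemma tensmxZl {R : realType} m n p q c (A : 'M[R[i]]_(m, n)) (B : 'M[R[i]]_(p, q)) :
  (c *: A) *t B = c *: (A *t B).
Proof. by apply/matrixP=> i j; rewrite !mxE mulrA. Qed.

Lemma tensmxZr {R : realType} m n p q c (A : 'M[R[i]]_(m, n)) (B : 'M[R[i]]_(p, q)) :
  A *t (c *: B) = c *: (A *t B).
Proof. by apply/matrixP=> i j; rewrite !mxE mulrCA. Qed.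

Lemma tensmx_suml {R : realType} m n p q I (r : seq I) (P : pred I)
  (A : I -> 'M[R[i]]_(m, n)) (B : 'M[R[i]]_(p, q)) :
  (\sum_(k <- r | P k) A k) *t B = \sum_(k <- r | P k) (A k *t B).
Proof.
apply/matrixP=> i j; rewrite mxE !summxE mulr_suml; apply: eq_bigr => k _.
by rewrite mxE.
Qed.

Lemma tensmx_sumr {R : realType} m n p q I (r : seq I) (P : pred I)
  (A : 'M[R[i]]_(m, n)) (B : I -> 'M[R[i]]_(p, q)) :
  A *t (\sum_(k <- r | P k) B k) = \sum_(k <- r | P k) (A *t B k).
Proof.
apply/matrixP=> i j; rewrite mxE !summxE mulr_sumr; apply: eq_bigr => k _.
by rewrite mxE.
Qed.

Lemma mxtrace_tens {R : realType} m n (A : 'M[R[i]]_m) (B : 'M[R[i]]_n) :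
  \tr (A *t B) = \tr A * \tr B.
Proof. by rewrite /mxtrace mulr_sum; apply: eq_bigr => k _; rewrite mxE. Qed.

Lemma sum_tens {R : realType} m n (F : 'I_(m * n) -> R[i]) :
  \sum_k F k = \sum_(i < m) \sum_(j < n) F (mxtens_index (i, j)).
Proof.
rewrite pair_big /= (reindex (@mxtens_index m n)) /=.
  by apply: eq_bigr => -[i j] _.
by exists (@mxtens_unindex m n) => k _; rewrite (mxtens_indexK, mxtens_unindexK).
Qed.

Lemma psd_tens {R : realType} m n (A : 'M[R[i]]_m) (B : 'M[R[i]]_n) :
  psdmx A -> psdmx B -> psdmx (A *t B).
Proof.
move=> pA pB; have [sA eA] := msqrt_spec pA; have [sB eB] := msqrt_spec pB.
have -> : A *t B = adj (msqrt A *t msqrt B) *m (msqrt A *t msqrt B).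
  by rewrite adj_tens !psd_herm // tensmx_mul eA eB.
exact: psd_adjXX.
Qed.

Lemma psd_delta {R : realType} n (j : 'I_n) : psdmx (delta_mx j j : 'M[R[i]]_n).
Proof.
have -> : (delta_mx j j : 'M[R[i]]_n) = adj (delta_mx j j) *m delta_mx j j.
  by rewrite adj_delta mul_delta_mx.
exact: psd_adjXX.
Qed.

Lemma tr_delta {R : realType} n (j : 'I_n) : \tr (delta_mx j j : 'M[R[i]]_n) = 1.
Proof.
rewrite /mxtrace (bigD1 j) //= big1 => [|k /negbTE kj]; first by rewrite mxE !eqxx addr0.
by rewrite mxE kj.
Qed.

Lemma sum_delta {R : realType} n : \sum_(j < n) (delta_mx j j : 'M[R[i]]_n) = 1%:M.
Proof.
apply/matrixP=> a b; rewrite summxE !mxE (bigD1 a) //= big1 => [|k /negbTE ka].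
  by rewrite mxE eqxx /= addr0 eq_sym.
by rewrite mxE eq_sym ka.
Qed.

Lemma block_mul {R : realType} m L (A B : 'I_L -> 'M[R[i]]_m) :
  (\sum_j (A j *t (delta_mx j j : 'M[R[i]]_L))) *m (\sum_k (B k *t (delta_mx k k : 'M[R[i]]_L)))
  = \sum_j ((A j *m B j) *t (delta_mx j j : 'M[R[i]]_L)).
Proof.
rewrite mulmx_suml; apply: eq_bigr => j _; rewrite mulmx_sumr (bigD1 j) //= big1.
  by rewrite tensmx_mul mul_delta_mx addr0.
by move=> k kj; rewrite tensmx_mul mul_delta_mx_0 ?tensmx0 // eq_sym.
Qed.

Lemma Re_realC {R : realType} (c : R) (z : R[i]) : complex.Re ((c%:C)%C * z) = c * complex.Re z.
Proof. by case: z => a b; rewrite /= mul0r subr0. Qed.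

Lemma tr_sum {R : realType} n I (r : seq I) (P : pred I) (X : I -> 'M[R[i]]_n) :
  \tr (\sum_(k <- r | P k) X k) = \sum_(k <- r | P k) \tr (X k).
Proof.
rewrite /mxtrace (eq_bigr (fun i => \sum_(k <- r | P k) X k i i)); last first.
  by move=> i _; rewrite summxE.
by rewrite exchange_big.
Qed.

Lemma trnorm_block {R : realType} m L (D : 'I_L -> 'M[R[i]]_m) :
  trnorm (\sum_j (D j *t (delta_mx j j : 'M[R[i]]_L))) = \sum_j trnorm (D j).
Proof.
rewrite /trnorm.
rewrite (@msqrt_uniq _ _ _ (\sum_j (msqrt (adj (D j) *m D j) *t (delta_mx j j : 'M[R[i]]_L)))).
- rewrite /trR tr_sum Re_sum; apply: eq_bigr => j _.
  by rewrite mxtrace_tens tr_delta mulr1.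
- apply: psd_sum => j _; apply: psd_tens; last exact: psd_delta.
  by case: (msqrt_spec (psd_adjXX (D j))).
rewrite block_mul adj_sum.
under [X in _ = X *m _]eq_bigr => j _ do rewrite adj_tens adj_delta.
rewrite block_mul; apply: eq_bigr => j _.
by case: (msqrt_spec (psd_adjXX (D j))) => _ ->.
Qed.

Lemma trnormZ {R : realType} n (c : R) (X : 'M[R[i]]_n) :
  0 <= c -> trnorm ((c%:C)%C *: X) = c * trnorm X.
Proof.
move=> c0; have [pS eS] := msqrt_spec (psd_adjXX X).
rewrite /trnorm (@msqrt_uniq _ _ _ ((c%:C)%C *: msqrt (adj X *m X))).
- by rewrite /trR mxtraceZ Re_realC.
- by apply: psdZ => //; rewrite lecR.
rewrite adjZ conj_Creal ?complex_real //.
by rewrite -!scalemxAl -!scalemxAr !scalerA eS.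
Qed.

Lemma castmxB' {R : realType} n n' (p : n = n') (A B : 'M[R[i]]_n) :
  castmx (p, p) (A - B) = castmx (p, p) A - castmx (p, p) B.
Proof. by case: n' / p; rewrite !castmx_id. Qed.

Lemma trnorm_cast {R : realType} n n' (p : n = n') (A : 'M[R[i]]_n) :
  trnorm (castmx (p, p) A) = trnorm A.
Proof. by case: n' / p; rewrite castmx_id. Qed.

Lemma psd_cast {R : realType} n n' (p : n = n') (A : 'M[R[i]]_n) :
  psdmx A -> psdmx (castmx (p, p) A).
Proof. by case: n' / p; rewrite castmx_id. Qed.

Lemma tr_cast {R : realType} n n' (p : n = n') (A : 'M[R[i]]_n) :
  \tr (castmx (p, p) A) = \tr A.
Proof. by case: n' / p; rewrite castmx_id. Qed.

Definition Kmx {R : realType} p q (f : 'I_q -> 'I_p) (P : pred 'I_q) : 'M[R[i]]_(p, q) :=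
  \matrix_(a, b) ((P b && (a == f b))%:R).

Lemma compress_entry {R : realType} p q (f : 'I_q -> 'I_p) (P : pred 'I_q)
  (X : 'M[R[i]]_p) i j :
  (adj (Kmx f P) *m X *m Kmx f P) i j = (P i && P j)%:R * X (f i) (f j).
Proof.
have h1 : forall b2, (adj (Kmx f P) *m X) i b2 = (P i)%:R * X (f i) b2.
  move=> b2; rewrite mxE (bigD1 (f i)) //= big1 => [|b1 /negbTE nb].
    by rewrite adjE mxE eqxx andbT conjC_nat addr0.
  by rewrite adjE mxE nb andbF conjC_nat mul0r.
rewrite mxE (bigD1 (f j)) //= big1 => [|b2 /negbTE nb].
  rewrite h1 mxE eqxx andbT addr0 -mulnb natrM; ring.
by rewrite [Kmx _ _ _ _]mxE nb andbF mulr0.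
Qed.

Lemma Tmap_kraus {R : realType} a1 a2 e (X : 'M[R[i]]_(a1 * a2 * e)) :
  Tmap X = \sum_(a < a1) \sum_(x2 < a2)
    adj (Kmx (fun q : 'I_(a1 * e) => mxtens_index (mxtens_index (a, x2), (mxtens_unindex q).2))
             (fun q => (mxtens_unindex q).1 == a))
    *m X *m
    (Kmx (fun q : 'I_(a1 * e) => mxtens_index (mxtens_index (a, x2), (mxtens_unindex q).2))
             (fun q => (mxtens_unindex q).1 == a)).
Proof.
apply/matrixP => i j; rewrite !mxE summxE.
under [RHS]eq_bigr => a _ do rewrite summxE.
under [RHS]eq_bigr => a _ do under eq_bigr => x2 _ do rewrite compress_entry.
case: eqP => [eij|nij].
  rewrite [RHS](bigD1 (mxtens_unindex i).1) // [X in _ = _ + X]big1 => [|a /negbTE na].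
    by rewrite addr0; apply: eq_bigr => x2 _; rewrite eqxx -eij eqxx andbT mulr1n mul1r.
  by apply: big1 => x2 _; rewrite [_ == a]eq_sym na mul0r.
rewrite big1 // => a _; apply: big1 => x2 _.
case: eqP => [ea|]; last by rewrite mul0r.
case: eqP => [eb|]; last by rewrite mul0r.
by case: nij; rewrite ea eb.
Qed.

Lemma psd_Tmap {R : realType} a1 a2 e (X : 'M[R[i]]_(a1 * a2 * e)) :
  psdmx X -> psdmx (Tmap X).
Proof.
move=> pX; rewrite Tmap_kraus; apply: psd_sum => a _; apply: psd_sum => x2 _.
exact: psd_conj.
Qed.

Lemma tr_Tmap {R : realType} a1 a2 e (X : 'M[R[i]]_(a1 * a2 * e)) :
  \tr (Tmap X) = \tr X.
Proof.
rewrite /mxtrace sum_tens [RHS]sum_tens sum_tens.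
apply: eq_bigr => a _; rewrite exchange_big /=; apply: eq_bigr => ee _.
by rewrite mxE mxtens_indexK eqxx.
Qed.

Lemma ptrace_kraus {R : realType} m n (X : 'M[R[i]]_(m * n)) :
  ptrace1 X = \sum_(a < m)
    adj (Kmx (fun q : 'I_n => mxtens_index (a, q)) predT) *m X *m
    Kmx (fun q : 'I_n => mxtens_index (a, q)) predT.
Proof.
apply/matrixP => i j; rewrite !mxE summxE; apply: eq_bigr => a _.
by rewrite compress_entry mul1r.
Qed.

Lemma psd_ptrace {R : realType} m n (X : 'M[R[i]]_(m * n)) :
  psdmx X -> psdmx (ptrace1 X).
Proof. by move=> pX; rewrite ptrace_kraus; apply: psd_sum => a _; exact: psd_conj. Qed.

Lemma tr_ptrace {R : realType} m n (X : 'M[R[i]]_(m * n)) :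
  \tr (ptrace1 X) = \tr X.
Proof.
rewrite /mxtrace [RHS]sum_tens exchange_big /=; apply: eq_bigr => k _.
by rewrite mxE.
Qed.

Lemma tens11 {R : realType} m n :
  (1%:M : 'M[R[i]]_m) *t (1%:M : 'M[R[i]]_n) = 1%:M.
Proof.
apply/matrixP => i j; rewrite !mxE -natrM mulnb; congr (_%:R).
rewrite -(inj_eq (can_inj (@mxtens_unindexK m n))).
by case: (mxtens_unindex i) => [i1 i2]; case: (mxtens_unindex j) => [j1 j2].
Qed.

Lemma psd_Mmeas {R : realType} a1 a2 e (U : 'M[R[i]]_(a1 * a2)) (X : 'M[R[i]]_(a1 * a2 * e)) :
  psdmx X -> psdmx (Mmeas U X).
Proof.
move=> pX; rewrite /Mmeas /relabel; apply: psd_Tmap.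
by rewrite -{1}(adjK (U *t 1%:M)); exact: psd_conj.
Qed.

Lemma tr_Mmeas {R : realType} a1 a2 e (U : 'M[R[i]]_(a1 * a2)) (X : 'M[R[i]]_(a1 * a2 * e)) :
  U \is unitarymx -> \tr (Mmeas U X) = \tr X.
Proof.
move=> uU; rewrite /Mmeas /relabel tr_Tmap mxtrace_mulC mulmxA.
rewrite adj_tens adj1 tensmx_mul (unitary_adjL uU) mul1mx tens11 mul1mx.
done.
Qed.

Lemma tens_assoc {R : realType} m n p (A : 'M[R[i]]_m) (B : 'M[R[i]]_n) (Cc : 'M[R[i]]_p) :
  castmx (esym (mulnA m n p), esym (mulnA m n p)) ((A *t B) *t Cc) = A *t (B *t Cc).
Proof.
have ec : forall (i1 : 'I_m) (i2 : 'I_n) (i3 : 'I_p),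
    cast_ord (esym (esym (mulnA m n p))) (mxtens_index (i1, mxtens_index (i2, i3))) =
    mxtens_index (mxtens_index (i1, i2), i3).
  by move=> i1 i2 i3; apply: val_inj => /=; rewrite mulnDl -mulnA addnA.
apply/matrixP => i j; rewrite castmxE /=.
case: i / (mxtens_indexP i) => i1 i23; case: i23 / (mxtens_indexP i23) => i2 i3.
case: j / (mxtens_indexP j) => j1 j23; case: j23 / (mxtens_indexP j23) => j2 j3.
by rewrite !ec !tensmxE mulrA.
Qed.

Lemma tr0dim {R : realType} n (M : 'M[R[i]]_n) : n = 0%N -> \tr M = 0.
Proof. by move=> n0; move: M; rewrite n0 => M; rewrite /mxtrace big_ord0. Qed.

Lemma pow2_log2 {R : realType} (a : R) : 0 < a -> (2 : R) `^ (- log2 a) = a^-1.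
Proof.
move=> a0; rewrite powRN; congr (_^-1).
have l2 : ln (2 : R) != 0 by rewrite gt_eqF // ln_gt0 // ltr1n.
rewrite /powR pnatr_eq0 /=.
rewrite /log2 mulfVK //; apply/eqP; rewrite lnK_eq; exact: a0.
Qed.

Unset Implicit Arguments.

Theorem lemma10 (R : realType) (a1 a2 e L : nat)
  (rho : 'M[R[i]]_(a1 * a2 * e)) (U : 'I_L -> 'M[R[i]]_(a1 * a2)) (eps : R) :
  (0 < L)%N ->
  density rho ->
  (forall j, U j \is unitarymx) ->
  (L%:R)^-1 * \sum_(j < L)
      trnorm (Mmeas (U j) rho
              - ((((a1%:R)^-1 : R)%:C)%C *: (1%:M : 'M[R[i]]_a1)) *t ptrace1 rho)
    <= eps ->
  ((log2 (a1%:R : R))%:E <=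
     Hmin_smooth (Num.sqrt (2 * eps))
       (castmx (esym (mulnA a1 e L), esym (mulnA a1 e L))
          ((((L%:R)^-1 : R)%:C)%C *: \sum_(j < L) (Mmeas (U j) rho *t delta_mx j j))))%E.
Proof.
move=> L0 [prho trho] uU hyp.
have n0 : (0 < a1 * a2 * e)%N.
  rewrite lt0n; apply/negP => /eqP h; move: trho; rewrite (tr0dim rho h).
  by move/eqP; rewrite eq_sym oner_eq0.
have a10 : (0 < a1)%N by move: n0; rewrite !muln_gt0 => /andP[/andP[]].
set c := esym (mulnA a1 e L).
set lc := ((((L%:R)^-1 : R)%:C)%C : R[i]).
set ac := ((((a1%:R)^-1 : R)%:C)%C : R[i]).
set rE := ptrace1 rho.
set T0 := (ac *: (1%:M : 'M[R[i]]_a1)) *t rE.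
set sig := rE *t (lc *: (1%:M : 'M[R[i]]_L)).
set tau := (ac *: (1%:M : 'M[R[i]]_a1)) *t sig.
set rho' := castmx (c, c) _.
have lc0 : 0 <= lc by rewrite /lc lecR invr_ge0 ler0n.
have ac0 : 0 <= ac by rewrite /ac lecR invr_ge0 ler0n.
have lcL : lc * L%:R = 1.
  by rewrite /lc -(rmorph_nat (real_complex R) L) -rmorphM /= mulVf ?pnatr_eq0 -?lt0n.
have acA : ac * a1%:R = 1.
  by rewrite /ac -(rmorph_nat (real_complex R) a1) -rmorphM /= mulVf ?pnatr_eq0 -?lt0n.
have pM : forall j, psdmx (Mmeas (U j) rho) by move=> j; exact: psd_Mmeas.
have tM : forall j, \tr (Mmeas (U j) rho) = 1 by move=> j; rewrite tr_Mmeas.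
have prE : psdmx rE by exact: psd_ptrace.
have trE : \tr rE = 1 by rewrite tr_ptrace.
have p1 : forall m, psdmx (1%:M : 'M[R[i]]_m).
  by move=> m; rewrite -[1%:M](@mul1mx _ m m) -{1}(@adj1 R m); exact: psd_adjXX.
have prho' : psdmx rho'.
  apply: psd_cast; apply: psdZ => //; apply: psd_sum => j _.
  apply: psd_tens => //; exact: psd_delta.
have trho' : \tr rho' = 1.
  rewrite tr_cast mxtraceZ tr_sum.
  under eq_bigr => j _ do rewrite mxtrace_tens tM tr_delta mulr1.
  by rewrite sumr_const card_ord -[X in _ * X]mulr_natr mul1r lcL.
have psig : psdmx sig by apply: psd_tens => //; apply: psdZ.
have tsig : \tr sig = 1 by rewrite mxtrace_tens trE mul1r mxtraceZ mxtrace1 lcL.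
have ptau : psdmx tau by apply: psd_tens => //; apply: psdZ.
have ttau : \tr tau = 1 by rewrite mxtrace_tens tsig mulr1 mxtraceZ mxtrace1 acA.
have etau : tau = castmx (c, c) (lc *: \sum_(j < L) (T0 *t delta_mx j j)).
  rewrite -tensmx_sumr sum_delta -tensmxZr /T0 tens_assoc.
  by rewrite /tau /sig tensmxZr.
have ediff : rho' - tau =
    castmx (c, c) (\sum_(j < L) ((lc *: (Mmeas (U j) rho - T0)) *t delta_mx j j)).
  rewrite etau /rho' -castmxB' -scalerBr -sumrB; congr (castmx _ _).
  rewrite scaler_sumr; apply: eq_bigr => j _.
  by rewrite tensmxZl tensmxBl.
have dist : trnorm (rho' - tau) <= eps.
  rewrite ediff trnorm_cast trnorm_block.
  under eq_bigr => j _ do rewrite trnormZ ?invr_ge0 ?ler0n //.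
  by rewrite -mulr_sumr.
have pd : Pdist rho' tau <= Num.sqrt (2 * eps).
  exact: pdist_bound.
have h3 : ((log2 (a1%:R : R))%:E <= Hmin_rel tau sig)%E.
  apply: ereal_sup_ubound; exists (log2 (a1%:R : R)) => //.
  rewrite /= pow2_log2 ?ltr0n // /tau -tensmxZl -/ac /lemx subrr; exact: psd0.
have h2 : (Hmin_rel tau sig <= Hmin tau)%E.
  by apply: ereal_sup_ubound; exists sig.
have h1 : (Hmin tau <= Hmin_smooth (Num.sqrt (2 * eps)) rho')%E.
  apply: ereal_sup_ubound; exists tau => //; split => //; split => //.
  by rewrite /trR ttau.
exact: le_trans h3 (le_trans h2 h1).
Qed.
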